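(* Let $s=(s_m)_{m\ge1}$ be a scale with $S=\mathrm{lcm}(s_m)$ infinite. Then the functions $\{1_{(x)}\}_{x=0,1,2,\dots}$ freely generate the abelian group $C(\mathbb Z_S,\mathbb Z)$ of continuous integer-valued functions on $\mathbb Z_S$: every $f\in C(\mathbb Z_S,\mathbb Z)$ can be written uniquely as a finite sum $f=\sum_{x\ge0}f_{(x)}1_{(x)}$ with $f_{(x)}\in\mathbb Z$.
   Context: A scale is a sequence of positive integers $(s_m)_{m\ge1}$ with $s_m\mid s_{m+1}$ and $s_m<s_{m+1}$; set $s_0=1$. $\mathbb Z_S=\varprojlim\mathbb Z/s_m\mathbb Z$ (sequences $(y_m)$ with $y_{m+1}\equiv y_m \bmod s_m$, product topology), containing $\mathbb Z$ as a dense subgroup. For $w\in\mathbb Z_S$ and $n\ge0$, ''$s_n\mid w$'' means the image of $w$ in $\mathbb Z/s_n\mathbb Z$ is $0$. For $n\ge0$ and integer $0\le x<s_n$, $1_{(n,x)}$ is the function on $\mathbb Z_S$ equal to $1$ at $z$ if $s_n\mid(z-x)$ and $0$ otherwise. For integers $x\ge1$ let $n(x)\ge1$ be defined by $s_{n(x)-1}\le x<s_{n(x)}$, and set $1_{(x)}:=1_{(n(x),x)}$; also $1_{(0)}:=1_{(0,0)}\equiv1$. *)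

(* Defs.v *)
From mathcomp Require Import all_boot all_order all_algebra.
From Stdlib Require Import ClassicalEpsilon.
Unset Printing Implicit Defensive.
Import Order.TTheory GRing.Theory Num.Theory.

Definition is_scale (s : nat -> nat) : Prop :=
  s 0 = 1 /\ (forall m, 0 < m -> 0 < s m) /\
  (forall m, 0 < m -> s m %| s m.+1 /\ s m < s m.+1).

(* Z_S = inverse limit of Z/s_m Z : compatible sequences of residues
   y m \in {0,..,s m - 1} with y (m+1) = y m mod s m.  (The coordinate m = 0,
   Z/1Z, is trivial.) *)
Definition Zs (s : nat -> nat) : Type :=
  {y : nat -> nat | forall m, y m < s m /\ y m.+1 %% s m = y m}.

Definition coord (s : nat -> nat) (z : Zs s) (m : nat) : nat := proj1_sig z m.

(* Continuity for the product topology on Z_S, with Z discrete: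
   every point has a cylinder neighbourhood (fixing finitely many
   coordinates, w.l.o.g. the first n+1) on which f is constant. *)
Definition continuousZ (s : nat -> nat) (f : Zs s -> int) : Prop :=
  forall z : Zs s, exists n : nat, forall w : Zs s,
    (forall m, m <= n -> coord s w m = coord s z m) -> f w = f z.

(* 1_{(n,x)} : equals 1 at z iff s_n | (z - x), i.e. the image of z in
   Z/s_n Z equals x mod s_n. *)
Definition ind (s : nat -> nat) (n x : nat) (z : Zs s) : int :=
  if coord s z n == x %% s n then 1%R else 0%R.

Definition nidx (s : nat -> nat) (x : nat) : nat :=
  epsilon (inhabits 0%N) (fun n => 0 < n /\ s n.-1 <= x < s n).

Definition ind1 (s : nat -> nat) (x : nat) (z : Zs s) : int :=
  if x == 0 then ind s 0 0 z else ind s (nidx s x) x z.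

(* Main.v *)
Require Import Defs.
From Stdlib Require Import Classical ClassicalEpsilon.
From mathcomp Require Import all_boot all_order all_algebra.
From mathcomp Require Import zify.
Import GRing.Theory.
Set Implicit Arguments.
Notation coord := Defs.coord.


Lemma s_pos s (hs : is_scale s) m : 0 < s m.
Proof. case: hs => h0 [hp _]. case: m => [|m]; first by rewrite h0. exact: hp. Qed.

Lemma s_dvd s (hs : is_scale s) m n : m <= n -> s m %| s n.
Proof.
move=> /subnK <-; elim: (n - m) => [|k IH]; first by rewrite add0n dvdnn.
rewrite addSn; apply: dvdn_trans IH _.
case: (k + m) => [|j]; first by case: hs => h0 _; rewrite h0 dvd1n.
by case: hs => _ [_ hd]; case: (hd j.+1 isT).
Qed.

Lemma s_le s (hs : is_scale s) m n : m <= n -> s m <= s n.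
Proof. move=> mn; by apply: dvdn_leq; [exact: s_pos | exact: s_dvd]. Qed.

Lemma coordP s (z : Zs s) m : coord s z m < s m /\ coord s z m.+1 %% s m = coord s z m.
Proof. exact: (proj2_sig z m). Qed.

Lemma coord_mod s (hs : is_scale s) (z : Zs s) m n : m <= n -> coord s z n %% s m = coord s z m.
Proof.
move=> /subnK <-; elim: (n - m) => [|k IH].
  by rewrite add0n modn_small //; case: (coordP z m).
rewrite addSn -IH -(coordP z (k + m)).2 modn_dvdm //.
have H := s_dvd hs m (k+m) (leq_addl _ _). exact: H.
Qed.

Lemma coordZ0 s (hs : is_scale s) (z : Zs s) : coord s z 0 = 0.
Proof. have := (coordP z 0).1; case: hs => -> _; by case: (coord s z 0). Qed.

Lemma emb_spec s (hs : is_scale s) r m : r %% s m < s m /\ (r %% s m.+1) %% s m = r %% s m.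
Proof. split; first exact: ltn_pmod (s_pos hs m). apply: modn_dvdm. exact: s_dvd hs m m.+1 (leqnSn m). Qed.

Definition emb s (hs : is_scale s) (r : nat) : Zs s :=
  exist _ (fun m => r %% s m) (emb_spec hs r).

Lemma coord_emb s (hs : is_scale s) r m : coord s (emb hs r) m = r %% s m.
Proof. by []. Qed.

Lemma nidx_spec s (hs : is_scale s) (hS : forall N : nat, exists m : nat, (N < s m)%N) x :
  0 < x -> 0 < nidx s x /\ s (nidx s x).-1 <= x < s (nidx s x).
Proof.
move=> x0.
have ex2 : exists n, 0 < n /\ s n.-1 <= x < s n.
  have ex : exists n, x < s n by apply: hS.
  case: (ex_minnP ex) => n xn nmin.
  exists n; split.
    case: n xn nmin => // ; case: hs => -> _; lia.
  rewrite xn andbT; case: n xn nmin => [|n] xn nmin /=.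
    by move: xn; case: hs => -> _; lia.
  by rewrite leqNgt; apply/negP => /nmin; lia.
exact: (epsilon_spec (inhabits 0%N) _ ex2).
Qed.

Lemma nidx_le s (hs : is_scale s) (hS : forall N : nat, exists m : nat, (N < s m)%N) x n :
  0 < x -> x < s n -> nidx s x <= n.
Proof.
move=> x0 xn; case: (nidx_spec hs hS _ x0) => p /andP [h1 h2].
rewrite leqNgt; apply/negP => lt.
have : s n <= s (nidx s x).-1 by apply: s_le => //; lia.
lia.
Qed.

Definition lev s x := if x == 0 then 0 else nidx s x.

Lemma ind1E s x z : ind1 s x z = ind s (lev s x) x z.
Proof. by rewrite /ind1 /lev; case: eqP => [->|]. Qed.

Lemma lev_le s (hs : is_scale s) (hS : forall N : nat, exists m : nat, (N < s m)%N) x n :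
  x < s n -> lev s x <= n.
Proof. rewrite /lev; case: eqP => [//|x0] xn; apply: nidx_le => //; lia. Qed.

Lemma ind1_dep s (hs : is_scale s) (hS : forall N : nat, exists m : nat, (N < s m)%N) x n z w :
  x < s n -> coord s z n = coord s w n -> ind1 s x z = ind1 s x w.
Proof.
move=> xn e; rewrite !ind1E /ind -!(coord_mod hs _ _ _ (lev_le hs hS _ _ xn)) e //.
Qed.

Lemma ind1_emb_gt s (hs : is_scale s) (hS : forall N : nat, exists m : nat, (N < s m)%N) x y :
  y < x -> ind1 s x (emb hs y) = 0%R.
Proof.
move=> yx; rewrite ind1E /lev; have x0 : x != 0 by lia.
rewrite (negbTE x0) /ind coord_emb.
case: (nidx_spec hs hS _ (_ : 0 < x)) => [|_ /andP [_ h]]; first lia.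
by rewrite !modn_small //; [case: eqP => //; lia | lia].
Qed.

Lemma ind1_emb_eq s (hs : is_scale s) x : ind1 s x (emb hs x) = 1%R.
Proof. by rewrite ind1E /ind coord_emb eqxx. Qed.


Definition witness s (f : Zs s -> int) m r k :=
  exists w w' : Zs s, coord s w m = r /\ coord s w k = coord s w' k /\ f w <> f w'.
Definition Bp s (f : Zs s -> int) n r := forall k, witness f n r k.

Lemma witness_mono s (hs : is_scale s) (f : Zs s -> int) m r k K :
  k <= K -> witness f m r K -> witness f m r k.
Proof.
move=> kK [w [w' [h1 [h2 h3]]]]; exists w, w'; split => //; split => //.
by rewrite -(coord_mod hs w _ _ kK) -(coord_mod hs w' _ _ kK) h2.
Qed.

Arguments witness_mono {s} hs {f m r k K}.

Lemma finite_max (Q : nat -> nat -> Prop) (Qm : forall r k K, k <= K -> Q r k -> Q r K) b :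
  (forall r, r < b -> exists k, Q r k) -> exists K, forall r, r < b -> Q r K.
Proof.
elim: b => [|b IH] H; first by exists 0.
case: IH => [r rb|K1 HK1]; first by apply: H; lia.
case: (H b (ltnSn b)) => k Hk.
exists (maxn K1 k) => r; rewrite ltnS leq_eqVlt => /orP [/eqP ->|rb].
  by apply: Qm Hk; exact: leq_maxr.
by apply: Qm (HK1 r rb); exact: leq_maxl.
Qed.

Lemma Bp_step s (hs : is_scale s) (f : Zs s -> int) n r :
  Bp f n r -> exists r', r' %% s n = r /\ r' < s n.+1 /\ Bp f n.+1 r'.
Proof.
move=> B; case: (classic (exists r', r' %% s n = r /\ r' < s n.+1 /\ Bp f n.+1 r')) => // Hno.
exfalso.
have H : forall r', r' < s n.+1 -> exists k, (r' %% s n = r -> ~ witness f n.+1 r' k).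
  move=> r' r'lt; case: (classic (r' %% s n = r)) => e; last by exists 0.
  have nB : ~ Bp f n.+1 r' by move=> Bp'; apply: Hno; exists r'.
  case: (not_all_ex_not _ _ nB) => k Hk; by exists k.
case: (@finite_max (fun r' k => r' %% s n = r -> ~ witness f n.+1 r' k) _ _ H) => [r' k K kK Hk e Hw|K HK].
  by apply: (Hk e); move: Hw; apply: witness_mono.
case: (B K) => w [w' [h1 [h2 h3]]].
apply: (HK (coord s w n.+1)); first exact: (coordP w n.+1).1.
  by rewrite (coordP w n).2.
by exists w, w'.
Qed.

Arguments Bp_step {s} hs {f n r}.

Definition nxt s (f : Zs s -> int) n r :=
  epsilon (inhabits 0%N) (fun r' => r' %% s n = r /\ r' < s n.+1 /\ Bp f n.+1 r').

Fixpoint yseq s (f : Zs s -> int) n :=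
  match n with 0 => 0 | n'.+1 => nxt f n' (yseq f n') end.

Lemma nxt_spec s (hs : is_scale s) (f : Zs s -> int) n r : Bp f n r ->
  nxt f n r %% s n = r /\ nxt f n r < s n.+1 /\ Bp f n.+1 (nxt f n r).
Proof.
move=> B; exact: (epsilon_spec (inhabits 0%N)
  (fun r' => r' %% s n = r /\ r' < s n.+1 /\ Bp f n.+1 r') (Bp_step hs B)).
Qed.

Definition dep s (f : Zs s -> int) n := forall w w', coord s w n = coord s w' n -> f w = f w'.

Lemma compact s (hs : is_scale s) (f : Zs s -> int) : continuousZ s f -> exists n, dep f n.
Proof.
move=> cf; case: (classic (exists n, dep f n)) => // Hnd; exfalso.
have B0 : Bp f 0 0.
  move=> k; case: (classic (witness f 0 0 k)) => // Hnw; exfalso.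
  apply: Hnd; exists k => w w' Hc; apply: NNPP => Hne; apply: Hnw.
  by exists w, w'; rewrite coordZ0.
have yB : forall n, Bp f n (yseq f n) /\ (yseq f n.+1 %% s n = yseq f n /\ yseq f n.+1 < s n.+1).
  elim => [|n [IH _]].
    have := nxt_spec hs B0.
    by case=> [h1 [h2 h3]]; split.
  have := nxt_spec hs IH.
  case=> [h1 [h2 h3]]; split => //.
  have := nxt_spec hs h3; case=> [h4 [h5 h6]]; by split.
have zP : forall m, yseq f m < s m /\ yseq f m.+1 %% s m = yseq f m.
  case=> [|m]; split; try exact: (yB _).2.1.
    by case: hs => -> _.
  exact: (yB m).2.2.
pose z : Zs s := exist _ (yseq f) zP.
case: (cf z) => n Hn.
case: ((yB n).1 n) => w [w' [h1 [h2 h3]]].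
apply: h3; rewrite (Hn w) ?(Hn w') // => m mn.
  by rewrite -(coord_mod hs w' _ _ mn) -(coord_mod hs z _ _ mn) -h2 h1.
by rewrite -(coord_mod hs w _ _ mn) -(coord_mod hs z _ _ mn) h1.
Qed.

Local Open Scope ring_scope.

Lemma rep_emb s (hs : is_scale s) (hS : forall N : nat, exists m : nat, (N < s m)%N)
   (f : Zs s -> int) k :
  exists c : nat -> int, (forall x, (k <= x)%N -> c x = 0) /\
    forall y, (y < k)%N -> f (emb hs y) = \sum_(x < k) c x * ind1 s x (emb hs y).
Proof.
elim: k => [|k [c [c0 cr]]]; first by exists (fun _ => 0); split.
pose v := f (emb hs k) - \sum_(x < k) c x * ind1 s x (emb hs k).
exists (fun x => if x == k then v else c x); split.
  move=> x kx; case: eqP => [e|_]; first lia.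
  apply: c0; lia.
move=> y yk; rewrite big_ord_recr /= eqxx.
rewrite (eq_bigr (fun i : 'I_k => c i * ind1 s i (emb hs y))); last first.
  by move=> i _ /=; rewrite ifN // neq_ltn ltn_ord.
rewrite ltnS leq_eqVlt in yk; case/orP: yk => [/eqP ->|yk].
  by rewrite ind1_emb_eq mulr1 /v addrC subrK.
by rewrite (ind1_emb_gt hs hS _ _ yk) mulr0 addr0 cr.
Qed.

Lemma rep s (hs : is_scale s) (hS : forall N : nat, exists m : nat, (N < s m)%N)
   (f : Zs s -> int) n : dep f n ->
  exists c : nat -> int, (forall x, (s n <= x)%N -> c x = 0) /\
    forall z, f z = \sum_(x < s n) c x * ind1 s x z.
Proof.
move=> df; case: (rep_emb hs hS f (s n)) => c [c0 cr]; exists c; split => // z.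
have zn := (coordP z n).1.
have ez : coord s (emb hs (coord s z n)) n = coord s z n by rewrite coord_emb modn_small.
rewrite (df z (emb hs (coord s z n))) ?ez // (cr _ zn).
apply: eq_bigr => i _; congr (_ * _); apply: (ind1_dep hs hS _ _ _ _ (ltn_ord i)).
by rewrite ez.
Qed.

Lemma uniq_rep s (hs : is_scale s) (hS : forall N : nat, exists m : nat, (N < s m)%N)
   M (d : nat -> int) :
  (forall z, \sum_(x < M) d x * ind1 s x z = 0) -> forall x, (x < M)%N -> d x = 0.
Proof.
move=> H; elim/ltn_ind => x IH xM.
have := H (emb hs x); rewrite (bigD1 (Ordinal xM)) //= ind1_emb_eq mulr1 big1 ?addr0 //.
move=> i ne; have : (i : nat) != x by apply: contraNneq ne => e; apply/eqP/val_inj.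
rewrite neq_ltn => /orP [ix|xi].
  by rewrite IH ?mul0r //; lia.
by rewrite (ind1_emb_gt hs hS _ _ xi) mulr0.
Qed.

Lemma widen_sum s (z : Zs s) (c : nat -> int) N M : (N <= M)%N -> (forall x, (N <= x)%N -> c x = 0) ->
  \sum_(x < N) c x * ind1 s x z = \sum_(x < M) c x * ind1 s x z.
Proof.
move=> NM c0; rewrite (big_ord_widen _ (fun x => c x * ind1 s x z) NM) big_mkcond /=.
apply: eq_bigr => i _; case: ifP => // /negbT; rewrite -leqNgt => /c0 ->; by rewrite mul0r.
Qed.

Unset Implicit Arguments.

Theorem mainTheorem11 (s : nat -> nat) (hs : is_scale s)
    (hS : forall N : nat, exists m : nat, (N < s m)%N) :
  (forall x : nat, continuousZ s (ind1 s x)) /\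
  (forall f : Zs s -> int, continuousZ s f ->
     exists c : nat -> int,
       (exists N : nat, (forall x, (N <= x)%N -> c x = 0) /\
          (forall z, f z = \sum_(x < N) c x * ind1 s x z)) /\
       (forall (c' : nat -> int) (N' : nat),
          (forall x, (N' <= x)%N -> c' x = 0) ->
          (forall z, f z = \sum_(x < N') c' x * ind1 s x z) ->
          forall x, c' x = c x)).
Proof.
split.
  move=> x z; exists (lev s x) => w hw.
  rewrite !ind1E /ind hw //.
move=> f cf; case: (compact hs cf) => n dn.
case: (rep hs hS dn) => c [c0 cr]; exists c; split; first by exists (s n).
move=> c' N' c'0 c'r x.
pose M := maxn (s n) N'.
have dz : forall z, \sum_(i < M) (c' i - c i) * ind1 s i z = 0.
  move=> z; under eq_bigr => i _ do rewrite mulrBl.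
  rewrite sumrB -(@widen_sum s z c (s n) M (leq_maxl _ _) c0) -(@widen_sum s z c' N' M (leq_maxr _ _) c'0).
  by rewrite -cr -c'r subrr.
case: (ltnP x M) => xM.
  apply: subr0_eq; exact: (@uniq_rep s hs hS M (fun i => c' i - c i) dz x xM).
rewrite c0 ?c'0 //; move: xM; rewrite geq_max => /andP [] //.
Qed.
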